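(* Let $\alpha\in(0,1)$ be irrational, let $$C_n=\prod_{t=1}^{q_n-1}\Big(1-\frac{s_{n0}^2}{s_{nt}^2}\Big)^{1/2},$$ and let $\kappa_n=\lfloor q_n^{1/2}\rfloor$. Then for sufficiently large $n$, $$C_n=\prod_{t=1}^{\kappa_n}\Big(1-\frac1{4(t/c_n-\xi_{nt})^2}\Big)+O(\kappa_n^{-1}).$$
   Context: Continued fraction notation: - $\alpha=[0;a_1,a_2,\ldots]$. - $q_0=0$, $q_1=1$, $q_{n+1}=a_nq_n+q_{n-1}$, and $p_0=1$, $p_1=0$, $p_{n+1}=a_np_n+p_{n-1}$. - $\Lambda_n=q_n\alpha-p_n$. - $c_n=1/(\alpha_n^++\alpha_n^-)$, where $\alpha_n^+=[a_n;a_{n+1},\ldots]$ and $\alpha_n^-=[0;a_{n-1},\ldots,a_1]$. Auxiliary quantities, for $t\in\{0,\ldots,q_n-1\}$: - $\xi_{nt}=\{tq_{n-1}/q_n\}-\frac12$; - $s_{nt}=2\sin\big(\pi[t/q_n-|\Lambda_n|\xi_{nt}]\big)$. The $O$-constant is independent of $n$. *)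

(* Defs.v *)
From Stdlib Require Import Reals Lra Lia ZArith List.
Open Scope R_scope.

Fixpoint gauss (alpha : R) (k : nat) : R :=
  match k with
  | O => alpha
  | S k' => frac_part (/ gauss alpha k')
  end.

(* Partial quotients: alpha = [0; a 1, a 2, ...], a (k+1) = floor (1 / x k).
   (a 0 is unused and set to 0.) *)
Definition cf_digit (alpha : R) (n : nat) : nat :=
  match n with
  | O => O
  | S k => Z.to_nat (Int_part (/ gauss alpha k))
  end.

Fixpoint cf_q (alpha : R) (n : nat) : nat :=
  match n with
  | O => O
  | S O => 1%nat
  | S ((S m) as n') => (cf_digit alpha n' * cf_q alpha n' + cf_q alpha m)%nat
  end.

Fixpoint cf_p (alpha : R) (n : nat) : nat :=
  match n with
  | O => 1%nat
  | S O => O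
  | S ((S m) as n') => (cf_digit alpha n' * cf_p alpha n' + cf_p alpha m)%nat
  end.

Definition cf_Lambda (alpha : R) (n : nat) : R :=
  INR (cf_q alpha n) * alpha - INR (cf_p alpha n).

Fixpoint cf_fin (l : list nat) : R :=
  match l with
  | nil => 0
  | b :: l' => / (INR b + cf_fin l')
  end.

(* alpha_n^+ = [a_n; a_{n+1}, ...], the n-th complete quotient 1 / x_{n-1}
   (for n >= 1). *)
Definition alpha_plus (alpha : R) (n : nat) : R := / gauss alpha (pred n).

Definition alpha_minus (alpha : R) (n : nat) : R :=
  cf_fin (rev (map (cf_digit alpha) (seq 1 (pred n)))).

Definition cf_c (alpha : R) (n : nat) : R :=
  / (alpha_plus alpha n + alpha_minus alpha n).

Definition xi (alpha : R) (n t : nat) : R :=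
  frac_part (INR t * INR (cf_q alpha (pred n)) / INR (cf_q alpha n)) - / 2.

Definition s_nt (alpha : R) (n t : nat) : R :=
  2 * sin (PI * (INR t / INR (cf_q alpha n) - Rabs (cf_Lambda alpha n) * xi alpha n t)).

Definition prod1 (N : nat) (f : nat -> R) : R :=
  fold_right Rmult 1 (map f (seq 1 N)).

Definition C_n (alpha : R) (n : nat) : R :=
  prod1 (pred (cf_q alpha n))
    (fun t => sqrt (1 - (s_nt alpha n 0) ^ 2 / (s_nt alpha n t) ^ 2)).

Definition kappa (alpha : R) (n : nat) : nat := Nat.sqrt (cf_q alpha n).

Definition P_n (alpha : R) (n : nat) : R :=
  prod1 (kappa alpha n)
    (fun t => 1 - / (4 * (INR t / cf_c alpha n - xi alpha n t) ^ 2)).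

Definition irrational (x : R) : Prop :=
  forall (p q : Z), q <> 0%Z -> x <> IZR p / IZR q.

(* Main.v *)
Require Import Defs.
From Stdlib Require Import Reals.
Open Scope R_scope.
From Stdlib Require Import Lra Lia List ZArith.


Lemma sin_lb3 x : 0 <= x -> x <= PI -> x - x^3/6 <= sin x.
Proof.
  intros H0 H1. destruct (sin_bound x 0 H0 H1) as [H _].
  replace (x - x^3/6) with (sin_approx x (2*0+1)); [exact H|].
  unfold sin_approx, sin_term. simpl. field.
Qed.

Lemma sin_le_x x : 0 <= x -> sin x <= x.
Proof. intros H. destruct (Req_dec x 0) as [->|Hn]. rewrite sin_0; lra.
  left; apply sin_lt_x; lra. Qed.

Lemma sin_lin x : 0 <= x -> x <= PI/2 -> x/3 <= sin x.
Proof. intros H0 H1. pose proof PI_4. pose proof (sin_lb3 x H0 ltac:(lra)).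
  assert (x^2 <= 4) by nra. nra. Qed.

Lemma sin_ratio a u : 0 < a <= u -> u <= 1 ->
  Rabs (sin a ^2 / sin u ^2 - a^2/u^2) <= u^2.
Proof.
  intros [Ha Hau] Hu. pose proof PI2_1.
  pose proof (sin_lb3 a ltac:(lra) ltac:(lra)) as La.
  pose proof (sin_lb3 u ltac:(lra) ltac:(lra)) as Lu.
  pose proof (sin_le_x a ltac:(lra)) as Ua.
  pose proof (sin_le_x u ltac:(lra)) as Uu.
  set (sa := sin a) in *. set (su := sin u) in *.
  assert (Hsa : 0 <= sa) by nra.
  set (c := 1 - u^2/6).
  assert (Hc : 5/6 <= c <= 1) by (unfold c; nra).
  assert (Hsu : u * c <= su) by (unfold c; nra).
  assert (Hsu0 : 0 < su) by nra.
  assert (Hq : a^2/u^2 <= 1).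
  { apply (Rmult_le_reg_r (u^2)). nra. unfold Rdiv. rewrite Rmult_assoc, Rinv_l by nra. nra. }
  apply Rabs_le; split.
  -
    assert (H2 : a^2 - a^4/3 <= sa^2).
    { assert (a*(1-a^2/6) <= sa) by nra. assert (0 <= a*(1-a^2/6)) by nra. nra. }
    assert (H3 : a^4 <= u^4) by (apply pow_incr; lra).
    assert (H4 : sa^2/su^2 >= sa^2/u^2).
    { apply Rle_ge. unfold Rdiv. apply Rmult_le_compat_l. nra.
      apply Rinv_le_contravar; nra. }
    assert (H5 : (a^2 - u^4)/u^2 <= sa^2/u^2).
    { unfold Rdiv. apply Rmult_le_compat_r. left; apply Rinv_0_lt_compat; nra. nra. }
    replace ((a^2 - u^4)/u^2) with (a^2/u^2 - u^2) in H5 by (field; lra). lra.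
  -
    assert (H2 : sa^2 <= a^2) by nra.
    assert (E: sa^2/su^2 <= a^2/(u*c)^2).
    { unfold Rdiv. apply Rmult_le_compat; try nra.
      left; apply Rinv_0_lt_compat; nra. apply Rinv_le_contravar. nra.
      assert (0 <= u*c) by nra. apply pow_incr; lra. }
    assert (E2 : a^2/(u*c)^2 - a^2/u^2 = (a^2/u^2) * ((1 - c^2)/c^2)) by (field; lra).
    assert (E3 : (1 - c^2)/c^2 <= u^2).
    { apply (Rmult_le_reg_r (c^2)). nra. unfold Rdiv. rewrite Rmult_assoc, Rinv_l by nra.
      unfold c. nra. }
    assert (E4 : 0 <= a^2/u^2).
    { unfold Rdiv. apply Rmult_le_pos. nra. left; apply Rinv_0_lt_compat; nra. }
    assert (E5 : 0 <= (1 - c^2)/c^2).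
    { unfold Rdiv. apply Rmult_le_pos. nra. left; apply Rinv_0_lt_compat; nra. }
    nra.
Qed.

Definition prodf (l : list nat) (f : nat -> R) := fold_right Rmult 1 (map f l).
Definition sumf (l : list nat) (f : nat -> R) := fold_right Rplus 0 (map f l).

Lemma prodf_app l1 l2 f : prodf (l1 ++ l2) f = prodf l1 f * prodf l2 f.
Proof. unfold prodf. induction l1; simpl. ring. rewrite IHl1. ring. Qed.

Lemma prodf_mult l f g : prodf l (fun t => f t * g t) = prodf l f * prodf l g.
Proof. unfold prodf. induction l; simpl. ring. rewrite IHl. ring. Qed.

Lemma prodf_ext l f g : (forall t, In t l -> f t = g t) -> prodf l f = prodf l g.
Proof. unfold prodf. induction l; simpl; intros H. auto.
  rewrite H by auto. rewrite IHl; auto. Qed.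

Lemma sumf_ext l f g : (forall t, In t l -> f t = g t) -> sumf l f = sumf l g.
Proof. unfold sumf. induction l; simpl; intros H. auto.
  rewrite H by auto. rewrite IHl; auto. Qed.

Lemma sumf_le l f g : (forall t, In t l -> f t <= g t) -> sumf l f <= sumf l g.
Proof. unfold sumf. induction l; simpl; intros H. lra.
  pose proof (H a (or_introl eq_refl)). assert (fold_right Rplus 0 (map f l) <= fold_right Rplus 0 (map g l)) by auto. lra. Qed.

Lemma sumf_const l c : sumf l (fun _ => c) = INR (length l) * c.
Proof. unfold sumf. induction l; cbn [length map fold_right]. simpl; ring. rewrite IHl, S_INR. ring. Qed.

Lemma prodf_01 l f : (forall t, In t l -> 0 <= f t <= 1) -> 0 <= prodf l f <= 1.
Proof. unfold prodf. induction l; simpl; intros H. lra.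
  pose proof (H a (or_introl eq_refl)). assert (0 <= fold_right Rmult 1 (map f l) <= 1) by auto. nra. Qed.

Lemma prodf_diff l f g : (forall t, In t l -> 0 <= f t <= 1 /\ 0 <= g t <= 1) ->
  Rabs (prodf l f - prodf l g) <= sumf l (fun t => Rabs (f t - g t)).
Proof. induction l; intros H. unfold prodf, sumf; simpl. rewrite Rminus_diag, Rabs_R0. lra.
  assert (H' : forall t, In t l -> 0 <= f t <= 1 /\ 0 <= g t <= 1) by (intros; apply H; simpl; auto).
  specialize (IHl H'). destruct (H a (or_introl eq_refl)) as [Hf Hg].
  pose proof (prodf_01 l f (fun t Ht => proj1 (H' t Ht))).
  pose proof (prodf_01 l g (fun t Ht => proj2 (H' t Ht))).
  change (prodf (a :: l) f) with (f a * prodf l f).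
  change (prodf (a :: l) g) with (g a * prodf l g).
  change (sumf (a :: l) (fun t => Rabs (f t - g t))) with (Rabs (f a - g a) + sumf l (fun t => Rabs (f t - g t))).
  replace (f a * prodf l f - g a * prodf l g) with (f a * (prodf l f - prodf l g) + (f a - g a) * prodf l g) by ring.
  eapply Rle_trans. apply Rabs_triang. rewrite !Rabs_mult.
  rewrite (Rabs_pos_eq (prodf l g)) by lra. rewrite (Rabs_pos_eq (f a)) by lra.
  pose proof (Rabs_pos (f a - g a)). pose proof (Rabs_pos (prodf l f - prodf l g)). nra.
Qed.

Lemma prodf_lower l f : (forall t, In t l -> 0 <= f t <= 1) ->
  1 - sumf l (fun t => 1 - f t) <= prodf l f.
Proof. induction l; intros H. unfold prodf, sumf; simpl. lra.
  assert (H' : forall t, In t l -> 0 <= f t <= 1) by (intros; apply H; simpl; auto).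
  specialize (IHl H'). pose proof (H a (or_introl eq_refl)).
  pose proof (prodf_01 l f H').
  change (prodf (a :: l) f) with (f a * prodf l f).
  change (sumf (a :: l) (fun t => 1 - f t)) with ((1 - f a) + sumf l (fun t => 1 - f t)).
  nra. Qed.

Lemma sumf_tele s n h : sumf (seq s n) (fun t => h t - h (S t)) = h s - h (s + n)%nat.
Proof. revert s. induction n; intros s; unfold sumf in *; simpl.
  rewrite Nat.add_0_r. ring. rewrite IHn. replace (S s + n)%nat with (s + S n)%nat by lia. ring. Qed.

Lemma prodf_rev q k F : (k <= q)%nat -> (forall t, (1 <= t <= k)%nat -> F (q - t)%nat = F t) ->
  prodf (seq (q - k) k) F = prodf (seq 1 k) F.
Proof. induction k; intros Hk H. reflexivity.
  replace (q - S k)%nat with (pred (q - k))%nat by lia.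
  replace (seq (pred (q - k)) (S k)) with (pred (q - k) :: seq (q - k) k)
    by (simpl; f_equal; f_equal; lia).
  rewrite seq_S, prodf_app. change (prodf (pred (q - k) :: seq (q - k) k) F) with
   (F (pred (q - k)) * prodf (seq (q - k) k) F).
  rewrite IHk by (try lia; intros; apply H; lia).
  unfold prodf at 3; simpl. replace (pred (q - k)) with (q - S k)%nat by lia. rewrite H by lia. ring.
Qed.

Lemma g_eq Q L T x : 0 < Q -> 0 < L -> PI * (T/Q - L*x) <> 0 ->
  1 - / (4 * (T / (Q * L) - x)^2) = 1 - (PI*L/2)^2 / (PI * (T/Q - L*x))^2.
Proof. intros HQ HL Hu. pose proof PI_RGT_0.
  assert (T - Q*L*x <> 0).
  { intro E. apply Hu. replace (T/Q - L*x) with ((T - Q*L*x)/Q) by (field; lra). rewrite E. unfold Rdiv. ring. }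
  field. repeat split; lra. Qed.

Lemma mid_bound Q M sa su : 0 < Q -> 2 <= M -> 0 <= sa <= PI/(2*Q) -> PI*(M-1/2)/(3*Q) <= su ->
  sa^2/su^2 <= 9/4 * (1/(M-1) - 1/M) /\ sa^2/su^2 <= 1 /\ 0 <= sa^2/su^2.
Proof. intros HQ HM Hsa Hsu. pose proof PI_RGT_0.
  assert (Hp : 0 < PI*(M-1/2)/(3*Q)). { apply Rdiv_lt_0_compat; nra. }
  assert (E1 : sa^2/su^2 <= (PI/(2*Q))^2 / (PI*(M-1/2)/(3*Q))^2).
  { unfold Rdiv at 1 2. apply Rmult_le_compat. nra. left; apply Rinv_0_lt_compat; nra.
    apply pow_incr; lra. apply Rinv_le_contravar. nra. apply pow_incr; lra. }
  replace ((PI/(2*Q))^2 / (PI*(M-1/2)/(3*Q))^2) with (9/4 * / (M-1/2)^2) in E1 by (field; lra).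
  assert (E2 : / (M-1/2)^2 <= 1/(M-1) - 1/M).
  { replace (1/(M-1) - 1/M) with (/ (M*(M-1))) by (field; lra).
    apply Rinv_le_contravar; nra. }
  assert (E3 : / (M-1/2)^2 <= 4/9).
  { replace (4/9) with (/ (9/4)) by field. apply Rinv_le_contravar; nra. }
  assert (E4 : 0 <= sa^2/su^2). { unfold Rdiv. apply Rmult_le_pos. nra. left; apply Rinv_0_lt_compat; nra. }
  repeat split; lra.
Qed.

Lemma sqrt_sq_bound f g : f <= 1 -> 0 <= g ->
  0 <= sqrt f * sqrt f <= 1 /\ Rabs (sqrt f * sqrt f - g) <= Rabs (f - g).
Proof. intros Hf Hg. destruct (Rle_lt_dec 0 f).
  rewrite sqrt_sqrt by lra. split; [lra|lra].
  rewrite sqrt_neg_0 by lra. rewrite Rmult_0_l. split. lra.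
  rewrite Rabs_left1 by lra. rewrite Rabs_left by lra. lra. Qed.

Lemma sqrt_ge_self f : 0 <= f <= 1 -> f <= sqrt f <= 1.
Proof. intros H. split.
  - pose proof (sqrt_sqrt f (proj1 H)). pose proof (sqrt_pos f).
    assert (sqrt f <= 1). { rewrite <- sqrt_1. apply sqrt_le_1_alt. lra. } nra.
  - rewrite <- sqrt_1. apply sqrt_le_1_alt. lra. Qed.

Definition Cc q L (xi : nat -> R) := prodf (seq 1 (pred q)) (fun t =>
  sqrt (1 - (2 * sin (PI * (INR 0 / INR q - L * xi 0%nat)))^2 /
            (2 * sin (PI * (INR t / INR q - L * xi t)))^2)).
Definition Pp q L (xi : nat -> R) k := prodf (seq 1 k) (fun t =>
  1 - / (4 * (INR t / (INR q * L) - xi t)^2)).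

Lemma core q k L xi :
  (1 <= k)%nat -> (k*k <= q)%nat -> (8*k+8 <= q)%nat ->
  0 < L -> L * INR q < 1 -> xi 0%nat = -/2 ->
  (forall t, (1 <= t < q)%nat -> -/2 <= xi t <= /2) ->
  (forall t, (1 <= t <= k)%nat -> xi (q - t)%nat = - xi t) ->
  Rabs (Cc q L xi - Pp q L xi k) <= 100 / INR k.
Proof.
  intros Hk1 Hkq Hkq8 HL HLq Hx0 Hxr Hxs.
  pose proof PI_RGT_0 as HPI. pose proof PI_4 as HPI4.
  set (Q := INR q). set (K := INR k).
  assert (HK1 : 1 <= K) by (unfold K; apply (le_INR 1); lia).
  assert (HKQ : K * K <= Q) by (unfold K, Q; rewrite <- mult_INR; apply le_INR; lia).
  assert (HKQ8 : 8*K+8 <= Q).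
  { unfold K, Q. replace 8 with (INR 8) by (simpl; ring). rewrite <- mult_INR, <- (plus_INR). apply le_INR; lia. }
  assert (HQ : 0 < Q) by lra.
  set (a := PI * L / 2).
  set (u := fun t => PI * (INR t / Q - L * xi t)).
  assert (Ha : 0 < a) by (unfold a; nra).
  assert (HL1 : L < / Q).
  { apply (Rmult_lt_reg_r Q). lra. rewrite Rinv_l by lra. change (INR q) with Q in HLq. lra. }
  assert (HaQ : a < PI / (2*Q)).
  { unfold a. replace (PI/(2*Q)) with (PI * /Q / 2) by (field; lra).
    unfold Rdiv. apply Rmult_lt_compat_r; [lra|]. apply Rmult_lt_compat_l; lra. }
  assert (Hub : forall t, (1 <= t < q)%nat ->
     PI * (INR t - /2) / Q <= u t <= PI * (INR t + /2) / Q /\ 0 < u t < PI).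
  { intros t Ht. destruct (Hxr t Ht) as [X1 X2]. unfold u.
    assert (HT : 1 <= INR t <= Q - 1).
    { split. apply (le_INR 1); lia. unfold Q. replace 1 with (INR 1) by reflexivity.
      rewrite <- minus_INR by lia. apply le_INR; lia. }
    assert (HLx : - (1/(2*Q)) <= L * xi t <= 1/(2*Q)).
    { replace (1/(2*Q)) with ((/Q)/2) by (field; lra). split; nra. }
    replace (PI * (INR t - /2) / Q) with (PI * (INR t / Q - 1/(2*Q))) by (field; lra).
    replace (PI * (INR t + /2) / Q) with (PI * (INR t / Q + 1/(2*Q))) by (field; lra).
    assert (1/(2*Q) < INR t / Q).
    { apply (Rmult_lt_reg_r Q). lra. field_simplify; lra. }
    assert (INR t / Q + 1/(2*Q) < 1).
    { apply (Rmult_lt_reg_r Q). lra. field_simplify; lra. }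
    repeat split; try nra. }
  set (f := fun t => 1 - sin a ^2 / sin (u t) ^2).
  set (F := fun t => sqrt (f t)).
  set (g := fun t => 1 - / (4 * (INR t / (INR q * L) - xi t)^2)).
  assert (E1 : Cc q L xi = prodf (seq 1 (pred q)) F).
  { unfold Cc. apply prodf_ext. intros t Ht. apply in_seq in Ht. unfold F, f. f_equal.
    rewrite Hx0. change (INR 0) with 0. change (INR q) with Q.
    replace (PI * (0 / Q - L * - / 2)) with a by (unfold a; field; lra).
    change (PI * (INR t / Q - L * xi t)) with (u t).
    destruct (Hub t ltac:(lia)) as [_ [Hu1 Hu2]].
    assert (0 < sin (u t)) by (apply sin_gt_0; lra).
    field. lra. }
  set (m := (q - 1 - 2*k)%nat).
  assert (Hsym : forall t, (1<=t<=k)%nat -> F (q-t)%nat = F t).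
  { intros t Ht. unfold F, f. replace (u (q-t)%nat) with (PI - u t). rewrite sin_PI_x. reflexivity.
    unfold u. rewrite Hxs by auto. rewrite minus_INR by lia. change (INR q) with Q. field. lra. }
  replace (pred q) with (k + (m + k))%nat in E1 by lia.
  rewrite seq_app, seq_app, prodf_app, prodf_app in E1.
  replace (1 + k + m)%nat with (q - k)%nat in E1 by lia.
  rewrite (prodf_rev q k F) in E1 by (try lia; exact Hsym).
  set (P1 := prodf (seq 1 k) F) in E1.
  set (M := prodf (seq (1 + k) m) F) in E1.
  assert (EA : P1 * P1 = prodf (seq 1 k) (fun t => F t * F t)) by (unfold P1; rewrite prodf_mult; reflexivity).
  assert (EP : Pp q L xi k = prodf (seq 1 k) g) by reflexivity.
  assert (Hfirst : forall t, In t (seq 1 k) ->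
     (0 <= F t * F t <= 1 /\ 0 <= g t <= 1) /\ Rabs (F t * F t - g t) <= 64 / Q).
  { intros t Ht. apply in_seq in Ht.
    destruct (Hub t ltac:(lia)) as [[Hl Hh] [Hu1 Hu2]].
    assert (HT : 1 <= INR t <= K) by (split; [apply (le_INR 1) | apply le_INR]; lia).
    assert (Hau : a <= u t).
    { apply Rle_trans with (PI * (INR t - /2) / Q); [|exact Hl].
      apply Rle_trans with (PI / (2*Q)); [lra|].
      replace (PI/(2*Q)) with (PI * (1 - /2)/Q) by (field; lra).
      unfold Rdiv. apply Rmult_le_compat_r. left; apply Rinv_0_lt_compat; lra.
      apply Rmult_le_compat_l; lra. }
    assert (HuK : u t * Q <= 8 * K).
    { apply Rle_trans with (PI * (INR t + /2)). 
      apply (Rmult_le_compat_r Q) in Hh; [|lra]. replace (PI * (INR t + / 2) / Q * Q) with (PI * (INR t + /2)) in Hh by (field; lra). exact Hh.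
      nra. }
    assert (Hu1' : u t <= 1).
    { apply (Rmult_le_reg_r Q). lra. nra. }
    assert (Hu64 : u t ^2 <= 64 / Q).
    { apply (Rmult_le_reg_r (Q*Q)). nra. replace (64 / Q * (Q*Q)) with (64 * Q) by (field; lra).
      assert (0 <= u t * Q) by nra. assert ((u t * Q)^2 <= (8*K)^2) by (apply pow_incr; lra). nra. }
    pose proof (sin_ratio a (u t) ltac:(lra) Hu1') as Hr.
    assert (Hg : g t = 1 - a^2 / u t ^2).
    { unfold g. change (INR q) with Q. rewrite g_eq by (try lra; fold (u t); lra). reflexivity. }
    assert (Hq1 : 0 <= a^2 / u t^2 <= 1).
    { split. unfold Rdiv. apply Rmult_le_pos. nra. left; apply Rinv_0_lt_compat; nra.
      apply (Rmult_le_reg_r (u t ^2)). nra. unfold Rdiv. rewrite Rmult_assoc, Rinv_l by nra. nra. }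
    assert (Hq2 : 0 <= sin a ^2 / sin (u t)^2).
    { unfold Rdiv. apply Rmult_le_pos. nra. left; apply Rinv_0_lt_compat.
      assert (0 < sin (u t)) by (apply sin_gt_0; lra). nra. }
    destruct (sqrt_sq_bound (f t) (g t) ltac:(unfold f; lra) ltac:(lra)) as [B1 B2].
    unfold F. split. split. exact B1. lra.
    eapply Rle_trans. exact B2. unfold f. rewrite Hg.
    replace (1 - sin a ^ 2 / sin (u t) ^ 2 - (1 - a ^ 2 / u t ^ 2)) with (- (sin a ^ 2 / sin (u t) ^ 2 - a ^ 2 / u t ^ 2)) by ring.
    rewrite Rabs_Ropp. lra. }
  assert (HAP : Rabs (P1 * P1 - Pp q L xi k) <= 64 / K).
  { rewrite EA, EP. eapply Rle_trans. apply prodf_diff. intros t Ht. apply (Hfirst t Ht).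
    eapply Rle_trans. apply (sumf_le _ _ (fun _ => 64 / Q)). intros t Ht. apply (Hfirst t Ht).
    rewrite sumf_const, length_seq. fold K.
    apply (Rmult_le_reg_r (K * Q)). nra.
    replace (K * (64/Q) * (K*Q)) with (64 * (K*K)) by (field; lra).
    replace (64 / K * (K*Q)) with (64 * Q) by (field; lra). lra. }
  set (h := fun t => 9/4 * (1 / (INR t - 1) - 1 / (Q - INR t))).
  assert (Hsa : 0 <= sin a <= PI / (2*Q)).
  { assert (PI/(2*Q) < PI). { apply (Rmult_lt_reg_r (2*Q)). lra. replace (PI/(2*Q)*(2*Q)) with PI by (field; lra). nra. }
    split. apply sin_ge_0; lra. pose proof (sin_le_x a ltac:(lra)). lra. }
  assert (Hmid : forall t, In t (seq (1 + k) m) ->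
     0 <= F t <= 1 /\ 1 - F t <= h t - h (S t)).
  { intros t Ht. apply in_seq in Ht.
    destruct (Hub t ltac:(lia)) as [[Hl Hh] [Hu1 Hu2]].
    assert (HT : K + 1 <= INR t).
    { unfold K. rewrite <- S_INR. apply le_INR. lia. }
    assert (HT2 : K + 1 <= Q - INR t).
    { unfold K, Q. rewrite <- S_INR, <- minus_INR by lia. apply le_INR. lia. }
    assert (Hx : sin a ^2 / sin (u t)^2 <= 9/4 * (1/(INR t - 1) - 1/INR t) + 9/4 * (1/(Q - INR t - 1) - 1/(Q - INR t))
                 /\ sin a ^2 / sin (u t)^2 <= 1 /\ 0 <= sin a ^2 / sin (u t)^2).
    { assert (P1' : 0 <= 1/(INR t - 1) - 1/INR t).
      { replace (1/(INR t - 1) - 1/INR t) with (/ (INR t * (INR t - 1))) by (field; lra).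
        left; apply Rinv_0_lt_compat; nra. }
      assert (P2' : 0 <= 1/(Q - INR t - 1) - 1/(Q - INR t)).
      { replace (1/(Q - INR t - 1) - 1/(Q - INR t)) with (/ ((Q - INR t) * (Q - INR t - 1))) by (field; lra).
        left; apply Rinv_0_lt_compat; nra. }
      destruct (Rle_lt_dec (u t) (PI/2)) as [Hc|Hc].
      - pose proof (sin_lin (u t) ltac:(lra) Hc).
        assert (PI * (INR t - 1/2) / (3*Q) <= sin (u t)).
        { replace (PI * (INR t - 1/2) / (3*Q)) with ((PI * (INR t - /2) / Q)/3) by (field; lra). lra. }
        destruct (mid_bound Q (INR t) (sin a) (sin (u t)) HQ ltac:(lra) Hsa H0) as [B1 [B2 B3]].
        repeat split; lra.
      - rewrite <- (sin_PI_x (u t)).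
        pose proof (sin_lin (PI - u t) ltac:(lra) ltac:(lra)).
        assert (PI * ((Q - INR t) - 1/2) / (3*Q) <= sin (PI - u t)).
        { assert (PI * ((Q - INR t) - 1/2) / (3*Q) = (PI - PI * (INR t + /2) / Q)/3) by (field; lra). lra. }
        destruct (mid_bound Q (Q - INR t) (sin a) (sin (PI - u t)) HQ ltac:(lra) Hsa H0) as [B1 [B2 B3]].
        repeat split; lra. }
    destruct Hx as [X1 [X2 X3]].
    destruct (sqrt_ge_self (f t) ltac:(unfold f; lra)) as [S1 S2].
    unfold F. split. split; [apply sqrt_pos | exact S2].
    assert (Eh : h t - h (S t) = 9/4 * (1/(INR t - 1) - 1/INR t) + 9/4 * (1/(Q - INR t - 1) - 1/(Q - INR t))).
    { unfold h. rewrite S_INR. field. repeat split; lra. }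
    rewrite Eh. unfold f in S1 |- *. lra. }
  assert (HM01 : 0 <= M <= 1) by (apply prodf_01; intros; apply Hmid; auto).
  assert (HM : 1 - M <= 9/2 / K).
  { pose proof (prodf_lower (seq (1 + k) m) F ltac:(intros; apply Hmid; auto)) as HL2. fold M in HL2.
    assert (sumf (seq (1 + k) m) (fun t => 1 - F t) <= sumf (seq (1 + k) m) (fun t => h t - h (S t)))
      by (apply sumf_le; intros; apply Hmid; auto).
    rewrite sumf_tele in H. replace (1 + k + m)%nat with (q - k)%nat in H by lia.
    assert (h (1 + k)%nat - h (q - k)%nat = 9/4 * (2/K - 2/(Q - K - 1))).
    { unfold h. rewrite minus_INR by lia. rewrite plus_INR. change (INR 1) with 1. fold K. change (INR q) with Q.
      field. repeat split; lra. }
    assert (0 <= 2/(Q - K - 1)) by (unfold Rdiv; apply Rmult_le_pos; [lra|left; apply Rinv_0_lt_compat; lra]).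
    lra. }
  assert (HA01 : 0 <= P1 * P1 <= 1).
  { rewrite EA. apply prodf_01. intros. apply (Hfirst t H). }
  rewrite E1.
  replace (P1 * (M * P1) - Pp q L xi k) with ((P1*P1 - Pp q L xi k) + (P1*P1) * (M - 1)) by ring.
  eapply Rle_trans. apply Rabs_triang. rewrite Rabs_mult, (Rabs_pos_eq (P1*P1)) by lra.
  rewrite (Rabs_left1 (M - 1)) by lra.
  assert (P1*P1 * - (M - 1) <= 1 * - (M - 1)) by (apply Rmult_le_compat_r; lra).
  assert (64/K + 9/2/K <= 100/K).
  { unfold Rdiv. assert (0 < /K) by (apply Rinv_0_lt_compat; lra). nra. }
  lra.
Qed.

Definition ratl x := exists p q : Z, q <> 0%Z /\ x = IZR p / IZR q.

Lemma frac_rat y : y <> 0 -> ratl (frac_part y) -> ratl (/ y).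
Proof. intros Hy [p [q [Hq E]]].
  pose proof (Rplus_Int_part_frac_part y) as Ey. rewrite E in Ey.
  set (I := Int_part y) in *.
  assert (Ey' : y = IZR (I * q + p) / IZR q).
  { rewrite Ey, plus_IZR, mult_IZR. field. apply not_0_IZR; auto. }
  assert (HIq : (I * q + p)%Z <> 0%Z).
  { intro Z0. rewrite Z0 in Ey'. apply Hy. rewrite Ey'. unfold Rdiv. ring. }
  exists q, (I*q+p)%Z. split; auto. rewrite Ey'. field. split; apply not_0_IZR; auto.
Qed.

Lemma gauss_facts alpha : 0 < alpha < 1 -> irrational alpha ->
  forall k, 0 < gauss alpha k < 1.
Proof. intros Ha Hirr.
  assert (forall k, (0 < gauss alpha k < 1) /\ (ratl (gauss alpha k) -> ratl alpha)).
  { induction k. simpl. split; auto.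
    destruct IHk as [[H0 H1] IH].
    assert (Hr : ratl (gauss alpha (S k)) -> ratl alpha).
    { intro R1. apply IH. replace (gauss alpha k) with (/ / gauss alpha k) by (field; lra).
      apply frac_rat. apply Rinv_neq_0_compat; lra. exact R1. }
    split; [|exact Hr]. simpl. destruct (base_fp (/ gauss alpha k)) as [B1 B2].
    split; [|lra]. destruct (Rge_gt_or_eq_dec _ _ B1) as [G|G] ; [lra|].
    exfalso. assert (ratl alpha).
    { apply Hr. simpl. rewrite G. exists 0%Z, 1%Z. split. lia. simpl. field. }
    destruct H as [p [q [Hq E]]]. exact (Hirr p q Hq E). }
  intro k. apply H.
Qed.

Lemma digit_facts alpha k : 0 < gauss alpha k < 1 ->
  INR (cf_digit alpha (S k)) = / gauss alpha k - gauss alpha (S k) /\ (1 <= cf_digit alpha (S k))%nat.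
Proof. intros [H0 H1]. simpl. set (y := / gauss alpha k).
  assert (Hy : 1 < y). { unfold y. rewrite <- Rinv_1. apply Rinv_lt_contravar; lra. }
  destruct (base_Int_part y) as [B1 B2].
  assert (HI : (1 <= Int_part y)%Z). { apply le_IZR. assert (0 < IZR (Int_part y)) by lra.
    apply lt_IZR in H. apply IZR_le. lia. }
  split. rewrite INR_IZR_INZ, Z2Nat.id by lia. unfold frac_part. ring.
  lia.
Qed.

Lemma q_SS alpha m : cf_q alpha (S (S m)) = (cf_digit alpha (S m) * cf_q alpha (S m) + cf_q alpha m)%nat.
Proof. reflexivity. Qed.
Lemma p_SS alpha m : cf_p alpha (S (S m)) = (cf_digit alpha (S m) * cf_p alpha (S m) + cf_p alpha m)%nat.
Proof. reflexivity. Qed.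

Lemma q_grow alpha : (forall k, 0 < gauss alpha k < 1) ->
  forall m, (1 <= cf_q alpha (S m))%nat /\ (m <= cf_q alpha (S m))%nat.
Proof. intros Hg.
  assert (forall m, (1 <= cf_q alpha (S m))%nat /\ (m + 1 <= cf_q alpha (S (S m)))%nat).
  { induction m.
    - split. simpl; lia. rewrite q_SS. destruct (digit_facts alpha 0 (Hg 0%nat)) as [_ D].
      change (cf_q alpha 1) with 1%nat. change (cf_q alpha 0) with 0%nat. lia.
    - destruct IHm as [A B]. split. lia. rewrite q_SS.
      destruct (digit_facts alpha (S m) (Hg (S m))) as [_ D]. nia. }
  intro m. destruct m. split; simpl; lia. destruct (H m). lia.
Qed.

Lemma alpha_rel alpha : 0 < alpha -> (forall k, 0 < gauss alpha k < 1) -> forall m,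
  alpha * (INR (cf_q alpha (S m)) * / gauss alpha m + INR (cf_q alpha m))
  = INR (cf_p alpha (S m)) * / gauss alpha m + INR (cf_p alpha m).
Proof. intros Ha Hg. induction m.
  - simpl. field. lra.
  - rewrite q_SS, p_SS, !plus_INR, !mult_INR.
    destruct (digit_facts alpha m (Hg m)) as [D _].
    set (A := INR (cf_digit alpha (S m))) in *.
    set (y := gauss alpha (S m)) in *.
    assert (Hy : 0 < y) by apply Hg.
    assert (E : / gauss alpha m = A + y) by lra. rewrite E in IHm.
    apply (Rmult_eq_reg_r y); [|lra].
    replace (alpha * ((A * INR (cf_q alpha (S m)) + INR (cf_q alpha m)) * / y + INR (cf_q alpha (S m))) * y)
      with (alpha * (INR (cf_q alpha (S m)) * (A + y) + INR (cf_q alpha m))) by (field; lra).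
    rewrite IHm. field. lra.
Qed.

Lemma detZ alpha m :
  (Z.of_nat (cf_q alpha (S m)) * Z.of_nat (cf_p alpha m) - Z.of_nat (cf_p alpha (S m)) * Z.of_nat (cf_q alpha m) = 1
  \/ Z.of_nat (cf_q alpha (S m)) * Z.of_nat (cf_p alpha m) - Z.of_nat (cf_p alpha (S m)) * Z.of_nat (cf_q alpha m) = -1)%Z.
Proof. induction m. simpl. lia.
  rewrite q_SS, p_SS, !Nat2Z.inj_add, !Nat2Z.inj_mul.
  set (a := Z.of_nat (cf_digit alpha (S m))). set (Q1 := Z.of_nat (cf_q alpha (S m))).
  set (Q0 := Z.of_nat (cf_q alpha m)). set (P1 := Z.of_nat (cf_p alpha (S m))).
  set (P0 := Z.of_nat (cf_p alpha m)) in *.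
  assert (E : ((a * Q1 + Q0) * P1 - (a * P1 + P0) * Q1 = - (Q1 * P0 - P1 * Q0))%Z) by ring.
  rewrite E. lia.
Qed.

Lemma alpha_minus_eq alpha : (forall k, 0 < gauss alpha k < 1) -> forall m,
  alpha_minus alpha (S m) = INR (cf_q alpha m) / INR (cf_q alpha (S m)).
Proof. intros Hg. unfold alpha_minus. simpl pred. induction m.
  - simpl. field.
  - rewrite seq_S, map_app, rev_app_distr. simpl (rev _). simpl app. cbn [cf_fin]. rewrite IHm.
    rewrite q_SS, plus_INR, mult_INR. replace (1 + m)%nat with (S m) by lia.
    destruct (q_grow alpha Hg m) as [Q1 _].
    destruct (digit_facts alpha m (Hg m)) as [_ D].
    assert (1 <= INR (cf_q alpha (S m))) by (apply (le_INR 1); auto).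
    assert (1 <= INR (cf_digit alpha (S m))) by (apply (le_INR 1); auto).
    assert (0 <= INR (cf_q alpha m)) by apply pos_INR.
    change (INR (Z.to_nat (Int_part (/ gauss alpha m)))) with (INR (cf_digit alpha (S m))). field. split; nra.
Qed.

Lemma lambda_eq alpha : 0 < alpha -> (forall k, 0 < gauss alpha k < 1) -> forall m,
  Rabs (cf_Lambda alpha (S m)) = / (INR (cf_q alpha (S m)) * / gauss alpha m + INR (cf_q alpha m)).
Proof. intros Ha Hg m. pose proof (alpha_rel alpha Ha Hg m) as AR.
  pose proof (detZ alpha m) as DZ.
  unfold cf_Lambda.
  set (Q := INR (cf_q alpha (S m))) in *. set (Q' := INR (cf_q alpha m)) in *.
  set (P := INR (cf_p alpha (S m))) in *. set (P' := INR (cf_p alpha m)) in *.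
  set (b := / gauss alpha m) in *.
  assert (Hb : 1 < b). { unfold b. rewrite <- Rinv_1. apply Rinv_lt_contravar; pose proof (Hg m); lra. }
  assert (HQ : 1 <= Q) by (apply (le_INR 1); apply q_grow; auto).
  assert (HQ' : 0 <= Q') by apply pos_INR.
  assert (DR : Q * P' - P * Q' = 1 \/ Q * P' - P * Q' = -1).
  { unfold Q, Q', P, P'. rewrite !INR_IZR_INZ, <- !mult_IZR, <- minus_IZR.
    destruct DZ as [E|E]; rewrite E; auto. }
  assert (E : Q * alpha - P = (Q * P' - P * Q') / (Q * b + Q')).
  { apply (Rmult_eq_reg_r (Q*b+Q')); [|nra].
    replace ((Q * P' - P * Q') / (Q * b + Q') * (Q * b + Q')) with (Q * P' - P * Q') by (field; nra).
    replace ((Q * alpha - P) * (Q * b + Q')) with (Q * (alpha * (Q * b + Q')) - P * (Q*b+Q')) by ring.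
    rewrite AR. ring. }
  rewrite E. unfold Rdiv. rewrite Rabs_mult. rewrite (Rabs_pos_eq (/ _)) by (left; apply Rinv_0_lt_compat; nra).
  destruct DR as [D|D]; rewrite D. rewrite Rabs_R1; ring. rewrite Rabs_left by lra; ring.
Qed.

Lemma c_eq alpha : 0 < alpha -> (forall k, 0 < gauss alpha k < 1) -> forall m,
  cf_c alpha (S m) = INR (cf_q alpha (S m)) * Rabs (cf_Lambda alpha (S m)).
Proof. intros Ha Hg m. unfold cf_c, alpha_plus. simpl pred. rewrite alpha_minus_eq by auto.
  rewrite lambda_eq by auto.
  assert (Hb : 1 < / gauss alpha m). { rewrite <- Rinv_1. apply Rinv_lt_contravar; pose proof (Hg m); lra. }
  assert (HQ : 1 <= INR (cf_q alpha (S m))) by (apply (le_INR 1); apply q_grow; auto).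
  assert (HQ' : 0 <= INR (cf_q alpha m)) by apply pos_INR.
  pose proof (Hg m). field. split; [lra|split; nra].
Qed.

Lemma frac_INR n : frac_part (INR n) = 0.
Proof. unfold frac_part. rewrite Int_part_INR, <- INR_IZR_INZ. ring. Qed.

Lemma xi_0 alpha n : xi alpha n 0 = - / 2.
Proof. unfold xi. change (INR 0) with 0. rewrite Rmult_0_l. unfold Rdiv. rewrite Rmult_0_l, fp_R0. ring. Qed.

Lemma xi_range alpha n t : - / 2 <= xi alpha n t <= / 2.
Proof. unfold xi. destruct (base_fp (INR t * INR (cf_q alpha (pred n)) / INR (cf_q alpha n))). lra. Qed.

Lemma zdiv_contra T Qz d X : (1 <= T < Qz)%Z -> (d = 1 \/ d = -1)%Z -> (T * d = Qz * X)%Z -> False.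
Proof. intros HT Hd E.
  destruct (Z_lt_le_dec X 0) as [X1|X1].
  - assert (Qz * X <= - Qz)%Z by nia. destruct Hd; subst; lia.
  - destruct (Z_lt_le_dec 0 X) as [X2|X2].
    + assert (Qz <= Qz * X)%Z by nia. destruct Hd; subst; lia.
    + assert (X = 0)%Z by lia. subst X. destruct Hd; subst; lia.
Qed.

Lemma xi_sym alpha : (forall k, 0 < gauss alpha k < 1) -> forall m t, (1 <= t < cf_q alpha (S m))%nat ->
  xi alpha (S m) (cf_q alpha (S m) - t)%nat = - xi alpha (S m) t.
Proof. intros Hg m t Ht. unfold xi. change (pred (S m)) with m.
  set (q := cf_q alpha (S m)) in *. set (q' := cf_q alpha m).
  assert (HQ : 0 < INR q) by (apply lt_0_INR; lia).
  set (y := INR t * INR q' / INR q).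
  assert (Hy : 0 < frac_part y).
  { destruct (base_fp y) as [B1 _]. destruct (Rge_gt_or_eq_dec _ _ B1) as [G|G]; [lra|].
    exfalso. destruct (fp_nat y G) as [c Hc]. unfold y in Hc.
    assert (E : INR t * INR q' = IZR c * INR q).
    { apply (Rmult_eq_reg_r (/ INR q)). rewrite <- Hc. field. lra. apply Rinv_neq_0_compat; lra. }
    rewrite !INR_IZR_INZ, <- !mult_IZR in E. apply eq_IZR in E.
    pose proof (detZ alpha m) as DZ. fold q q' in DZ.
    set (P := Z.of_nat (cf_p alpha (S m))) in *. set (P' := Z.of_nat (cf_p alpha m)) in *.
    set (T := Z.of_nat t) in *. set (Qz := Z.of_nat q) in *. set (Q'z := Z.of_nat q') in *.
    assert (HT : (1 <= T < Qz)%Z) by (unfold T, Qz; lia).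
    assert (E2 : forall d, (Qz * P' - P * Q'z = d)%Z -> (T * d = Qz * (T * P' - P * c))%Z).
    { intros d Hd. rewrite <- Hd. ring_simplify. 
      replace (T * Qz * P' - T * P * Q'z)%Z with (T * Qz * P' - P * (T * Q'z))%Z by ring.
      rewrite E. ring. }
    assert (HQz : (0 < Qz)%Z) by lia.
    destruct DZ as [D|D]; apply E2 in D.
    exact (zdiv_contra T Qz 1 _ HT ltac:(lia) D). exact (zdiv_contra T Qz (-1) _ HT ltac:(lia) D). }
  replace (INR (q - t) * INR q' / INR q) with (INR q' - y) by (unfold y; rewrite minus_INR by lia; field; lra).
  rewrite Rminus_fp2 by (rewrite frac_INR; lra). rewrite frac_INR. lra.
Qed.

Theorem lemma4p3 (alpha : R) (H0 : 0 < alpha) (H1 : alpha < 1)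
  (Hirr : irrational alpha) :
  exists (K : R) (N : nat), forall n : nat, (N <= n)%nat ->
    Rabs (C_n alpha n - P_n alpha n) <= K / INR (kappa alpha n).
Proof.
  pose proof (gauss_facts alpha (conj H0 H1) Hirr) as Hg.
  exists 100, 101%nat. intros n Hn.
  destruct n as [|m]; [lia|].
  pose proof (proj2 (q_grow alpha Hg m)) as Hqm.
  set (q := cf_q alpha (S m)) in *.
  set (k := kappa alpha (S m)).
  destruct (Nat.sqrt_spec q) as [Hs1 Hs2]; [lia|].
  change (Nat.sqrt q) with k in Hs1, Hs2.
  assert (Hk10 : (10 <= k)%nat) by nia.
  assert (Hk8 : (8 * k + 8 <= q)%nat) by nia.
  set (L := Rabs (cf_Lambda alpha (S m))).
  replace (C_n alpha (S m)) with (Cc q L (xi alpha (S m))) by reflexivity.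
  replace (P_n alpha (S m)) with (Pp q L (xi alpha (S m)) k)
    by (unfold P_n, Pp, prod1; rewrite c_eq by auto; reflexivity).
  assert (HL : L = / (INR q * / gauss alpha m + INR (cf_q alpha m))) by (apply lambda_eq; auto).
  assert (Hb : 1 < / gauss alpha m). { rewrite <- Rinv_1. apply Rinv_lt_contravar; pose proof (Hg m); lra. }
  assert (HQ : 1 <= INR q) by (apply (le_INR 1); apply q_grow; auto).
  assert (HQ' : 0 <= INR (cf_q alpha m)) by apply pos_INR.
  apply core.
  - lia.
  - lia.
  - lia.
  - rewrite HL. apply Rinv_0_lt_compat. nra.
  - rewrite HL. apply (Rmult_lt_reg_r (INR q * / gauss alpha m + INR (cf_q alpha m))). nra.
    replace (/ (INR q * / gauss alpha m + INR (cf_q alpha m)) * INR q * (INR q * / gauss alpha m + INR (cf_q alpha m))) with (INR q) by (pose proof (Hg m); field; repeat split; try lra; nra). nra.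
  - apply xi_0.
  - intros; apply xi_range.
  - intros t Ht. apply xi_sym; auto. lia.
Qed.
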